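(* Let $n\ge 3$. In the Game of Cycles on the $C_n$ board (a cycle graph with $n$ vertices and $n$ edges embedded in the plane, with its single bounded cell), the outcome is determined by the parity of $n$ regardless of how the players play: if $n$ is odd, Player~1 wins, and if $n$ is even, Player~2 wins.
   Context: The Game of Cycles. A board is a simple connected planar graph embedded in the plane, together with its bounded cells. Two players alternate turns; on a turn a player marks one unmarked edge with an arrow pointing along the edge in one of its two directions. Each edge receives at most one arrow, and arrows have the same effect regardless of who placed them. Moves must obey the sink-source rule: no move may create a sink (a vertex all of whose incident edges are marked with arrows pointing toward it) or a source (a vertex all of whose incident edges are marked with arrows pointing away from it). A player who has a legal move must make one. A cycle cell is a bounded cell all of whose boundary edges are marked with arrows all cycling in the same direction around that cell. The first player to create a cycle cell wins; if play ends (no legal move remains) without a cycle cell, the player who made the last move wins. *)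

(* Defs.v *)
From mathcomp Require Import all_boot.
Set Implicit Arguments. Unset Strict Implicit. Unset Printing Implicit Defensive.

(* Board C_n: vertices 'I_n; edge e : 'I_n joins vertex e and vertex ordS e
   (= e+1 mod n).  The single bounded cell has all n edges on its boundary.
   A marking is a map edge -> option bool:
     None        = unmarked,
     Some true   = arrow from e to e+1,
     Some false  = arrow from e+1 to e. *)
Definition marking (n : nat) := {ffun 'I_n -> option bool}.

Definition empty_marking (n : nat) : marking n := [ffun _ => None].

(* The two edges incident to vertex v are edge v (to v+1) and edge (v-1). *)
Definition is_sink n (s : marking n) (v : 'I_n) : bool :=
  (s v == Some false) && (s (ord_pred v) == Some true).
Definition is_source n (s : marking n) (v : 'I_n) : bool :=
  (s v == Some true) && (s (ord_pred v) == Some false).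

Definition no_sink_source n (s : marking n) : bool :=
  [forall v, ~~ is_sink s v && ~~ is_source s v].

Definition cycle_cell n (s : marking n) : bool :=
  [forall e, s e == Some true] || [forall e, s e == Some false].

Definition move (n : nat) := ('I_n * bool)%type.

Definition step n (s : marking n) (m : move n) : marking n :=
  [ffun e => if e == m.1 then Some m.2 else s e].

Definition legal n (s : marking n) (m : move n) : bool :=
  (s m.1 == None) && no_sink_source (step s m).

Definition after n (s : marking n) (ms : seq (move n)) : marking n :=
  foldl (@step n) s ms.

Fixpoint valid_play n (s : marking n) (ms : seq (move n)) : bool :=
  match ms with
  | [::] => true
  | m :: ms' => ~~ cycle_cell s && legal s m && valid_play (step s m) ms'
  end.

Definition no_legal_move n (s : marking n) : bool := [forall m : move n, ~~ legal s m].

Definition complete_play n (ms : seq (move n)) : bool :=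
  valid_play (empty_marking n) ms &&
  (cycle_cell (after (empty_marking n) ms) || no_legal_move (after (empty_marking n) ms)).

Inductive player := Player1 | Player2.

(* The player making the k-th move (k >= 1): Player 1 makes odd moves. *)
Definition mover (k : nat) : player := if odd k then Player1 else Player2.

Definition winner n (ms : seq (move n)) : option player :=
  let s := after (empty_marking n) ms in
  if cycle_cell s then Some (mover (size ms))
  else if no_legal_move s then Some (mover (size ms))
  else None.

(* Main.v *)
Require Import Defs.
From mathcomp Require Import all_boot zify.
Set Implicit Arguments. Unset Strict Implicit. Unset Printing Implicit Defensive.

Lemma ordS_neq n (hn : 2 <= n) (e : 'I_n) : ordS e != e.
Proof.
apply/eqP => /(congr1 val) /=; have := ltn_ord e.
move=> he; case: (ltnP e.+1 n) => h.
  rewrite modn_small // => h1; lia.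
have -> : e.+1 = n by lia.
by rewrite modnn => h0; lia.
Qed.

Lemma ord_pred_neq n (hn : 2 <= n) (e : 'I_n) : ord_pred e != e.
Proof.
apply/eqP => h; have := ordS_neq hn e.
by rewrite -{1}h ord_predK eqxx.
Qed.

Lemma legal_dir n (hn : 2 <= n) (s : marking n) (e : 'I_n) (c : bool) :
  s e = None -> no_sink_source s ->
  s (ord_pred e) != Some (~~ c) -> s (ordS e) != Some (~~ c) -> legal s (e, c).
Proof.
move=> se ns hp hq; rewrite /legal /= se; apply/andP; split => //.
apply/forallP => v; rewrite /is_sink /is_source !ffunE /=.
have := ord_pred_neq hn e; have := ordS_neq hn e => hS hP.
case: (eqVneq v e) => [->|hve].
  rewrite (negbTE hP).
  by case: c hp {hq} => /=; case: (s (ord_pred e)) => [[]|].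
case: (eqVneq (ord_pred v) e) => [hpv|hpv].
  have hv : v = ordS e by rewrite -hpv ord_predK.
  rewrite hv.
  by case: c hq {hp} => /=; case: (s (ordS e)) => [[]|].
by have /forallP := ns; move/(_ v).
Qed.

Definition dd n (s : marking n) (e : 'I_n) : bool :=
  if s e is Some x then x else s (ord_pred e) == Some true.

Lemma trans_local n (hn : 2 <= n) (s : marking n) (e : 'I_n) :
  no_sink_source s -> (s e = None -> forall c, ~~ legal s (e, c)) ->
  (dd s e != dd s (ordS e)) = (s e == None).
Proof.
move=> ns H; rewrite /dd; case he: (s e) => [x|].
  case hq: (s (ordS e)) => [y|]; last by rewrite ordSK he; case: x {he}.
  have /forallP/(_ (ordS e)) := ns.
  by rewrite /is_sink /is_source ordSK he hq; case: x {he}; case: y {hq}.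
have hT := H he true; have hF := H he false.
have LT := @legal_dir n hn s e true he ns.
have LF := @legal_dir n hn s e false he ns.
rewrite ordSK he.
move: hT hF LT LF => /negP hT /negP hF LT LF.
case hp: (s (ord_pred e)) LT LF => [[]|]; case hq: (s (ordS e)) => [[]|] /= LT LF //;
  exfalso; first [by apply: hT; apply: LT | by apply: hF; apply: LF].
Qed.

Lemma cyc_even n (b : 'I_n -> bool) : ~~ odd (\sum_e (b e != b (ordS e))).
Proof.
have h1 : \sum_e (b e != b (ordS e)) + 2 * \sum_e (b e && b (ordS e)) = 2 * \sum_e (b e : nat).
  rewrite big_distrr -big_split /=.
  rewrite (eq_bigr (fun e => b e + b (ordS e))); last by move=> e _; case: (b e); case: (b (ordS e)).
  rewrite big_split /= mul2n -addnn; congr (_ + _).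
  by rewrite [RHS](reindex_inj (@ordS_inj n)).
by move/(congr1 odd): h1; rewrite oddD !oddM /= addbF => ->.
Qed.

Definition NN n (s : marking n) := \sum_e (s e == None : nat).

Lemma NN_step n (s : marking n) m : s m.1 = None -> NN (step s m) + 1 = NN s.
Proof.
move=> se; rewrite /NN (bigD1 m.1) //= [RHS](bigD1 m.1) //= ffunE eqxx se /=.
rewrite add0n addnC; congr (_ + _); apply: eq_bigr => e ne; by rewrite ffunE (negbTE ne).
Qed.

Lemma play_inv n (ms : seq (move n)) : forall s : marking n,
  no_sink_source s -> valid_play s ms ->
  no_sink_source (after s ms) /\ NN (after s ms) + size ms = NN s.
Proof.
elim: ms => [|m ms IH] s ns /=; first by rewrite addn0.
case/andP => /andP [_ /andP [/eqP se ns']] vp.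
have [a b] := IH _ ns' vp; split => //.
rewrite -(NN_step se) -b addnS addn1. done.
Qed.

Theorem theorem4p3 (n : nat) (hn : 3 <= n) (ms : seq (move n)) :
  complete_play ms ->
  winner ms = Some (if odd n then Player1 else Player2).
Proof.
have hn2 : 2 <= n by apply: leq_trans hn.
case/andP => vp hend.
have ns0 : no_sink_source (empty_marking n).
  by apply/forallP => v; rewrite /is_sink /is_source !ffunE.
have [ns hN] := play_inv ns0 vp.
set s := after (empty_marking n) ms in ns hN hend *.
have N0 : NN (empty_marking n) = n.
  rewrite /NN (eq_bigr (fun _ => 1)); last by move=> e _; rewrite ffunE.
  by rewrite sum_nat_const card_ord muln1.
have dead : forall e, s e = None -> forall c, ~~ legal s (e, c).
  move=> e se c; case/orP: hend => [hc|hl].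
    by move: hc; rewrite /cycle_cell => /orP [] /forallP/(_ e); rewrite se.
  by move/forallP: hl => /(_ (e, c)).
have hE : NN s = \sum_e (dd s e != dd s (ordS e)).
  by apply: eq_bigr => e _; rewrite (trans_local hn2 ns (dead e)).
have ev := cyc_even (dd s).
have hodd : odd (size ms) = odd n.
  by have := congr1 odd hN; rewrite N0 oddD hE (negbTE ev) /= => ->.
have -> : winner ms = Some (mover (size ms)).
  rewrite /winner -/s; case: ifP => // hc; case: ifP => // hl.
  by move: hend; rewrite hc hl.
by rewrite /mover hodd.
Qed.
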